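(* Under the standing setup below, for every initial condition $x(0)\in[0,1]^n$ the opinion dynamics converge as $k\to\infty$ to a point $x^*(g,h)\in\mathbb R^n$ that does not depend on $x(0)$. The matrix $E\triangleq I-W+(g-h)\gamma I$ is invertible, and $$x^*(g,h)=E^{-1}\big(I-D-2\beta I+(h-g)\gamma I\big)s+E^{-1}\big((h+g)\beta\mathbf 1+(g^2-h^2)\gamma\mathbf 1\big),$$ where $D=\mathrm{diag}\big(\sum_{j}w_{1j},\dots,\sum_j w_{nj}\big)$ and $\mathbf 1$ is the all-ones vector.
   Context: Standing setup. Fix $n\in\mathbb N$ and $W=[w_{ij}]\in\mathbb R^{n\times n}$ with $w_{ij}\ge 0$ and $w_{ii}=0$. Let $\|W\|_\infty=\max_i\sum_j|w_{ij}|$, $\|W\|_1=\max_j\sum_i|w_{ij}|$, and let $\lambda$ be the spectral radius of $W$; assume there is a vector $c\in\mathbb R^n$ with all entries positive and $W^\top c=\lambda c$. Fix bias parameters $\beta,\gamma\in\mathbb R$ with $\beta\ge\gamma\ge0$ and $1-\max\{\|W\|_\infty,\|W\|_1\}>\max\{2\beta,4\gamma\}$. Fix innate opinions $s=(s_1,\dots,s_n)^\top\in[0,1]^n$, let $\overline s=\max_i s_i$, $\underline s=\min_i s_i$, and fix source opinions $g,h$ with $0\le g\le\underline s\le\overline s\le h\le1$. For $x\in\mathbb R$ set $\overline w(x)=\beta-\gamma|x-h|$, $\underline w(x)=\beta-\gamma|x-g|$, and $\alpha_i(x)=1-\sum_j w_{ij}-\overline w(x)-\underline w(x)$. The opinion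 dynamics are, for $i=1,\dots,n$ and $k\ge0$, $$x_i(k+1)=\alpha_i(x_i(k))s_i+\sum_{j=1}^n w_{ij}x_j(k)+\overline w(x_i(k))\,h+\underline w(x_i(k))\,g.$$ *)

(* Defs.v *)
(* classical reals (limits needed). Vectors in R^n are
   functions nat -> R (only indices 0..n-1 matter), n x n matrices are
   functions nat -> nat -> R. *)
From Stdlib Require Import Reals Lra Lia.
Open Scope R_scope.

Fixpoint rsum (n : nat) (f : nat -> R) : R :=
  match n with O => 0 | S m => rsum m f + f m end.

(* max_{i < n} f i  (0 for n = 0; used only on nonnegative quantities) *)
Fixpoint rmaxn (n : nat) (f : nat -> R) : R :=
  match n with O => 0 | S m => Rmax (rmaxn m f) (f m) end.

Definition norm_inf (n : nat) (W : nat -> nat -> R) : R :=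
  rmaxn n (fun i => rsum n (fun j => Rabs (W i j))).
Definition norm_one (n : nat) (W : nat -> nat -> R) : R :=
  rmaxn n (fun j => rsum n (fun i => Rabs (W i j))).

(* a + i b is a (complex) eigenvalue of the real matrix W: there is a nonzero
   complex vector u + i v with W (u + i v) = (a + i b)(u + i v). *)
Definition is_complex_eigenvalue (n : nat) (W : nat -> nat -> R) (a b : R) : Prop :=
  exists u v : nat -> R,
    (exists i, (i < n)%nat /\ (u i <> 0 \/ v i <> 0)) /\
    forall i, (i < n)%nat ->
      rsum n (fun j => W i j * u j) = a * u i - b * v i /\
      rsum n (fun j => W i j * v j) = b * u i + a * v i.

Definition is_spectral_radius (n : nat) (W : nat -> nat -> R) (lam : R) : Prop :=
  (exists a b, is_complex_eigenvalue n W a b /\ lam = sqrt (a * a + b * b)) /\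
  (forall a b, is_complex_eigenvalue n W a b -> sqrt (a * a + b * b) <= lam).

Definition wbar (beta gamma h x : R) : R := beta - gamma * Rabs (x - h).
Definition wund (beta gamma g x : R) : R := beta - gamma * Rabs (x - g).
Definition alpha (n : nat) (W : nat -> nat -> R) (beta gamma g h : R) (i : nat) (x : R) : R :=
  1 - rsum n (fun j => W i j) - wbar beta gamma h x - wund beta gamma g x.

Definition step (n : nat) (W : nat -> nat -> R) (beta gamma g h : R)
  (s : nat -> R) (x : nat -> R) : nat -> R :=
  fun i => alpha n W beta gamma g h i (x i) * s i + rsum n (fun j => W i j * x j)
           + wbar beta gamma h (x i) * h + wund beta gamma g (x i) * g.

Fixpoint traj (n : nat) (W : nat -> nat -> R) (beta gamma g h : R)
  (s x0 : nat -> R) (k : nat) : nat -> R :=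
  match k with
  | O => x0
  | S k' => step n W beta gamma g h s (traj n W beta gamma g h s x0 k')
  end.

Definition idm (i j : nat) : R := if Nat.eqb i j then 1 else 0.
Definition matmul (n : nat) (A B : nat -> nat -> R) : nat -> nat -> R :=
  fun i j => rsum n (fun k => A i k * B k j).

Definition is_inverse (n : nat) (E Einv : nat -> nat -> R) : Prop :=
  (forall i j, (i < n)%nat -> (j < n)%nat -> matmul n E Einv i j = idm i j) /\
  (forall i j, (i < n)%nat -> (j < n)%nat -> matmul n Einv E i j = idm i j).

Definition Emat (W : nat -> nat -> R) (gamma g h : R) : nat -> nat -> R :=
  fun i j => idm i j - W i j + (g - h) * gamma * idm i j.

Definition xstar (n : nat) (W : nat -> nat -> R) (beta gamma g h : R)
  (s : nat -> R) (Einv : nat -> nat -> R) : nat -> R :=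
  fun i =>
    rsum n (fun j => Einv i j *
      ((1 - rsum n (fun l => W j l) - 2 * beta + (h - g) * gamma) * s j))
    + rsum n (fun j => Einv i j *
      ((h + g) * beta + (g * g - h * h) * gamma)).

(* Main.v *)
Require Import Defs.
From Stdlib Require Import Reals Lra Lia.
Open Scope R_scope.

Lemma rsum_ext n f g : (forall j, (j < n)%nat -> f j = g j) -> rsum n f = rsum n g.
Proof. induction n; intros H; simpl; auto. rewrite IHn by (intros; apply H; lia). rewrite H by lia. auto. Qed.

Lemma rsum_plus n f g : rsum n (fun j => f j + g j) = rsum n f + rsum n g.
Proof. induction n; simpl. lra. rewrite IHn. lra. Qed.

Lemma rsum_scal n a f : rsum n (fun j => a * f j) = a * rsum n f.
Proof. induction n; simpl. lra. rewrite IHn. lra. Qed.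

Lemma rsum_le n f g : (forall j, (j < n)%nat -> f j <= g j) -> rsum n f <= rsum n g.
Proof. induction n; intros H; simpl. lra. assert (rsum n f <= rsum n g) by (apply IHn; intros; apply H; lia).
 assert (f n <= g n) by (apply H; lia). lra. Qed.

Lemma rsum_abs n f : Rabs (rsum n f) <= rsum n (fun j => Rabs (f j)).
Proof. induction n; simpl. rewrite Rabs_R0; lra. eapply Rle_trans. apply Rabs_triang. lra. Qed.

Lemma rsum_swap n m (F : nat -> nat -> R) :
  rsum n (fun k => rsum m (F k)) = rsum m (fun j => rsum n (fun k => F k j)).
Proof. induction n; simpl.
 - induction m; simpl; lra.
 - rewrite IHn. rewrite <- rsum_plus. reflexivity. Qed.

Lemma rsum_idm n i v : (i < n)%nat -> rsum n (fun j => idm i j * v j) = v i.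
Proof. induction n; intros H; simpl. lia.
 destruct (Nat.eq_dec i n) as [->|Hne].
 - assert (rsum n (fun j => idm n j * v j) = rsum n (fun _ => 0)).
   { apply rsum_ext. intros j Hj. unfold idm. destruct (Nat.eqb_spec n j). lia. lra. }
   rewrite H0. unfold idm. rewrite Nat.eqb_refl.
   assert (rsum n (fun _ => 0) = 0). { clear. induction n; simpl; lra. } lra.
 - rewrite IHn by lia. unfold idm. destruct (Nat.eqb_spec i n). lia. lra. Qed.

Lemma rmaxn_ge n f i : (i < n)%nat -> f i <= rmaxn n f.
Proof. induction n; intros H; simpl. lia.
 destruct (Nat.eq_dec i n) as [->|Hne]. apply Rmax_r.
 eapply Rle_trans. apply IHn; lia. apply Rmax_l. Qed.

Lemma rmaxn_nonneg n f : 0 <= rmaxn n f.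
Proof. induction n; simpl. lra. eapply Rle_trans. apply IHn. apply Rmax_l. Qed.

Lemma rmaxn_lub n f B : (forall i, (i < n)%nat -> f i <= B) -> 0 <= B -> rmaxn n f <= B.
Proof. induction n; intros H HB; simpl. lra. apply Rmax_lub. apply IHn; [intros; apply H; lia | auto]. apply H; lia. Qed.

Lemma geo_small q C eps : 0 <= q < 1 -> 0 <= C -> 0 < eps ->
  exists N, forall k, (k >= N)%nat -> q ^ k * C < eps.
Proof. intros Hq HC He.
 destruct (pow_lt_1_zero q ltac:(rewrite Rabs_right; lra) (eps / (C + 1))) as [N HN].
 { apply Rdiv_lt_0_compat; lra. }
 exists N. intros k Hk. specialize (HN k Hk). rewrite Rabs_right in HN by (apply Rle_ge, pow_le; lra).
 assert (q ^ k * (C + 1) < eps).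
 { apply Rmult_lt_reg_r with (/ (C+1)). apply Rinv_0_lt_compat; lra.
   rewrite Rmult_assoc, Rinv_r by lra. unfold Rdiv in HN. lra. }
 assert (0 <= q ^ k) by (apply pow_le; lra). nra. Qed.

Lemma geo_cv (u : nat -> R) l q C : 0 <= q < 1 -> 0 <= C ->
  (forall k, Rabs (u k - l) <= q ^ k * C) -> Un_cv u l.
Proof. intros Hq HC H eps He. destruct (geo_small q C eps Hq HC He) as [N HN].
 exists N. intros k Hk. unfold R_dist. eapply Rle_lt_trans. apply H. apply HN. lia. Qed.

Lemma geo_nonpos a q C : 0 <= q < 1 -> 0 <= C -> (forall k, a <= q ^ k * C) -> a <= 0.
Proof. intros Hq HC H. destruct (Rle_dec a 0) as [|Ha]; auto. exfalso.
 destruct (geo_small q C a Hq HC ltac:(lra)) as [N HN]. specialize (HN N (le_n _)).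
 specialize (H N). lra. Qed.

Lemma row_le_norm n W i : (forall i j, (i < n)%nat -> (j < n)%nat -> 0 <= W i j) ->
  (i < n)%nat -> rsum n (fun j => W i j) <= norm_inf n W.
Proof. intros HW Hi. unfold norm_inf.
 replace (rsum n (fun j => W i j)) with (rsum n (fun j => Rabs (W i j))).
 apply (rmaxn_ge n (fun i => rsum n (fun j => Rabs (W i j)))); auto.
 apply rsum_ext. intros j Hj. apply Rabs_right. apply Rle_ge. auto. Qed.

Lemma W_bound n W i e M : (forall i j, (i < n)%nat -> (j < n)%nat -> 0 <= W i j) ->
  (i < n)%nat -> (forall j, (j < n)%nat -> Rabs (e j) <= M) ->
  Rabs (rsum n (fun j => W i j * e j)) <= norm_inf n W * M.
Proof. intros HW Hi He.
 assert (HM : 0 <= M) by (eapply Rle_trans; [apply Rabs_pos| apply (He i Hi)]).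
 eapply Rle_trans. apply rsum_abs.
 eapply Rle_trans. apply (rsum_le n _ (fun j => W i j * M)).
 { intros j Hj. rewrite Rabs_mult, Rabs_right by (apply Rle_ge; auto).
   apply Rmult_le_compat_l; auto. }
 rewrite (rsum_ext n (fun j => W i j * M) (fun j => M * W i j)) by (intros; ring).
 rewrite rsum_scal. assert (H1 := row_le_norm n W i HW Hi). rewrite (Rmult_comm M). apply Rmult_le_compat_r; auto. Qed.

Lemma rsum_minus n (a x y : nat -> R) :
  rsum n (fun j => a j * x j) - rsum n (fun j => a j * y j) = rsum n (fun j => a j * (x j - y j)).
Proof.
 rewrite (rsum_ext n (fun j => a j * (x j - y j)) (fun j => a j * x j + (-1) * (a j * y j))) by (intros; ring).
 rewrite rsum_plus, rsum_scal. ring. Qed.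

Lemma step_contr n W beta gamma g h s x y i M :
  (forall i j, (i < n)%nat -> (j < n)%nat -> 0 <= W i j) -> (i < n)%nat ->
  0 <= gamma -> g <= s i <= h ->
  (forall j, (j < n)%nat -> Rabs (x j - y j) <= M) ->
  Rabs (step n W beta gamma g h s x i - step n W beta gamma g h s y i) <= (norm_inf n W + gamma * (h - g)) * M.
Proof. intros HW Hi Hg Hs HM.
 assert (E : step n W beta gamma g h s x i - step n W beta gamma g h s y i =
   rsum n (fun j => W i j * (x j - y j)) +
   (gamma * (s i - h) * (Rabs (x i - h) - Rabs (y i - h)) + gamma * (s i - g) * (Rabs (x i - g) - Rabs (y i - g)))).
 { rewrite <- rsum_minus. unfold step, alpha, wbar, wund. ring. }
 rewrite E. eapply Rle_trans. apply Rabs_triang.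
 assert (H1 := W_bound n W i (fun j => x j - y j) M HW Hi HM).
 assert (Hxy := HM i Hi).
 assert (Ha := Rabs_triang_inv2 (x i - h) (y i - h)).
 assert (Hb := Rabs_triang_inv2 (x i - g) (y i - g)).
 replace (x i - h - (y i - h)) with (x i - y i) in Ha by ring.
 replace (x i - g - (y i - g)) with (x i - y i) in Hb by ring.
 set (a := Rabs (x i - h) - Rabs (y i - h)) in *.
 set (b := Rabs (x i - g) - Rabs (y i - g)) in *.
 assert (-M <= a <= M) by (revert Ha Hxy; unfold Rabs at 1; destruct Rcase_abs; intros; split; lra).
 assert (-M <= b <= M) by (revert Hb Hxy; unfold Rabs at 1; destruct Rcase_abs; intros; split; lra).
 assert (0 <= gamma * (h - s i)) by nra.
 assert (0 <= gamma * (s i - g)) by nra.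
 assert (Rabs (gamma * (s i - h) * a + gamma * (s i - g) * b) <= gamma * (h - g) * M).
 { apply Rabs_le. split; nra. }
 lra. Qed.

Definition bvec n W beta gamma g h (s : nat -> R) i :=
  (1 - rsum n (fun l => W i l) - 2 * beta + (h - g) * gamma) * s i + ((h + g) * beta + (g * g - h * h) * gamma).
Definition Lm n W gamma g h (bb x : nat -> R) i :=
  bb i + rsum n (fun j => W i j * x j) + gamma * (h - g) * x i.

Lemma Lm_contr n W gamma g h bb x y i M :
  (forall i j, (i < n)%nat -> (j < n)%nat -> 0 <= W i j) -> (i < n)%nat ->
  0 <= gamma -> g <= h ->
  (forall j, (j < n)%nat -> Rabs (x j - y j) <= M) ->
  Rabs (Lm n W gamma g h bb x i - Lm n W gamma g h bb y i) <= (norm_inf n W + gamma * (h - g)) * M.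
Proof. intros HW Hi Hg Hgh HM.
 assert (E : Lm n W gamma g h bb x i - Lm n W gamma g h bb y i =
   rsum n (fun j => W i j * (x j - y j)) + gamma * (h - g) * (x i - y i)).
 { rewrite <- rsum_minus. unfold Lm. ring. }
 rewrite E. eapply Rle_trans. apply Rabs_triang.
 assert (H1 := W_bound n W i (fun j => x j - y j) M HW Hi HM).
 assert (Hxy := HM i Hi).
 rewrite Rabs_mult, (Rabs_right (gamma * (h - g))) by nra.
 assert (0 <= gamma * (h-g)) by nra. nra. Qed.

Lemma step_Lm n W beta gamma g h s x i : g <= x i <= h ->
  step n W beta gamma g h s x i = Lm n W gamma g h (bvec n W beta gamma g h s) x i.
Proof. intros Hx. unfold step, Lm, bvec, alpha, wbar, wund.
 rewrite (Rabs_left1 (x i - h)) by lra. rewrite (Rabs_right (x i - g)) by lra. ring. Qed.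

Lemma Lm_inv n W beta gamma g h s x i :
  (forall i j, (i < n)%nat -> (j < n)%nat -> 0 <= W i j) -> (i < n)%nat ->
  0 <= gamma <= beta -> 0 <= g -> h <= 1 -> g <= s i <= h ->
  1 - norm_inf n W > 2 * beta ->
  (forall j, (j < n)%nat -> g <= x j <= h) ->
  g <= Lm n W gamma g h (bvec n W beta gamma g h s) x i <= h.
Proof. intros HW Hi Hgb Hg Hh Hs Hn Hx.
 assert (Hd := row_le_norm n W i HW Hi).
 set (d := rsum n (fun j => W i j)) in *.
 assert (HS1 : rsum n (fun j => W i j * g) <= rsum n (fun j => W i j * x j)).
 { apply rsum_le. intros j Hj. apply Rmult_le_compat_l. auto. apply Hx; auto. }
 assert (HS2 : rsum n (fun j => W i j * x j) <= rsum n (fun j => W i j * h)).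
 { apply rsum_le. intros j Hj. apply Rmult_le_compat_l. auto. apply Hx; auto. }
 rewrite (rsum_ext n (fun j => W i j * g) (fun j => g * W i j)) in HS1 by (intros; ring).
 rewrite (rsum_ext n (fun j => W i j * h) (fun j => h * W i j)) in HS2 by (intros; ring).
 rewrite rsum_scal in HS1, HS2. fold d in HS1, HS2.
 unfold Lm, bvec. fold d. set (S := rsum n (fun j => W i j * x j)) in *.
 assert (Hxi := Hx i Hi).
 set (al := 1 - d - 2 * beta + (h - g) * gamma).
 assert (Hal : 0 <= al) by (unfold al; nra).
 assert (Hwb : 0 <= beta - gamma * (h - x i)) by nra.
 assert (Hwu : 0 <= beta - gamma * (x i - g)) by nra.
 assert (0 <= al * (s i - g)) by nra.
 assert (0 <= al * (h - s i)) by nra.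
 assert (0 <= (beta - gamma * (h - x i)) * (h - g)) by nra.
 assert (0 <= (beta - gamma * (x i - g)) * (h - g)) by nra.
 assert (E1 : S + (h + g) * beta + (g * g - h * h) * gamma + al * s i + gamma * (h - g) * x i - g
   = al * (s i - g) + (S - g * d) + (beta - gamma * (h - x i)) * (h - g)) by (unfold al; ring).
 assert (E2 : h - (S + (h + g) * beta + (g * g - h * h) * gamma + al * s i + gamma * (h - g) * x i)
   = al * (h - s i) + (h * d - S) + (beta - gamma * (x i - g)) * (h - g)) by (unfold al; ring).
 change (rsum n (W i)) with d in HS1, HS2. split; lra. Qed.

Lemma xstar_eq n W beta gamma g h s Einv i :
  xstar n W beta gamma g h s Einv i = rsum n (fun j => Einv i j * bvec n W beta gamma g h s j).
Proof. unfold xstar, bvec. rewrite <- rsum_plus. apply rsum_ext. intros; ring. Qed.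

Lemma E_apply n E Einv (bb : nat -> R) i :
  (forall i j, (i < n)%nat -> (j < n)%nat -> matmul n E Einv i j = idm i j) -> (i < n)%nat ->
  rsum n (fun k => E i k * rsum n (fun j => Einv k j * bb j)) = bb i.
Proof. intros H Hi.
 rewrite (rsum_ext n _ (fun k => rsum n (fun j => E i k * Einv k j * bb j))).
 2:{ intros k Hk. rewrite <- rsum_scal. apply rsum_ext. intros; ring. }
 rewrite rsum_swap.
 rewrite (rsum_ext n _ (fun j => idm i j * bb j)). apply rsum_idm; auto.
 intros j Hj. rewrite <- H by auto. unfold matmul.
 rewrite (rsum_ext n (fun k => E i k * Einv k j * bb j) (fun k => bb j * (E i k * Einv k j))) by (intros; ring).
 rewrite rsum_scal. ring. Qed.

Lemma xstar_fixed n W beta gamma g h s Einv i :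
  is_inverse n (Emat W gamma g h) Einv -> (i < n)%nat ->
  Lm n W gamma g h (bvec n W beta gamma g h s) (xstar n W beta gamma g h s Einv) i
  = xstar n W beta gamma g h s Einv i.
Proof. intros [H1 H2] Hi.
 set (bb := bvec n W beta gamma g h s).
 set (xs := xstar n W beta gamma g h s Einv).
 assert (Hx : forall k, xs k = rsum n (fun j => Einv k j * bb j)) by (intros; apply xstar_eq).
 assert (HE := E_apply n (Emat W gamma g h) Einv bb i H1 Hi).
 rewrite (rsum_ext n _ (fun k => Emat W gamma g h i k * xs k)) in HE by (intros; rewrite Hx; auto).
 unfold Emat in HE.
 rewrite (rsum_ext n _ (fun k => idm i k * xs k + ((-1) * (W i k * xs k) + ((g - h) * gamma) * (idm i k * xs k)))) in HE by (intros; ring).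
 rewrite !rsum_plus, !rsum_scal, rsum_idm in HE by auto.
 unfold Lm. lra. Qed.

Module MC.
From mathcomp Require Import all_boot all_algebra.
From mathcomp Require Import Rstruct.
Import GRing.Theory.


Lemma rsum_big n (f : nat -> R) : rsum n f = (\sum_(k < n) f k)%R.
Proof.
elim: n => [|n IH]; first by rewrite big_ord0.
by rewrite big_ord_recr /= IH.
Qed.

Lemma inv_exists n (E : nat -> nat -> R) :
  (forall u : nat -> R, (forall i, (i < n)%coq_nat -> rsum n (fun k => E i k * u k) = 0) ->
     forall i, (i < n)%coq_nat -> u i = 0) ->
  exists Einv, is_inverse n E Einv.
Proof.
move=> Hinj.
pose M := ((\matrix_(i < n, j < n) E j i)%R : 'M[R]_n).
have HM : forall v : 'rV[R]_n, (v *m M = 0)%R -> v = 0%R.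
  move=> v Hv.
  pose u k := match @insub nat (fun k => (k < n)%N) _ k with Some i => v ord0 i | None => 0 end.
  have Hu : forall i : 'I_n, u i = v ord0 i.
    move=> i; rewrite /u insubT //= => Hi; congr (v ord0 _); exact: val_inj.
  apply/matrixP => i0 j; rewrite ord1 mxE -Hu; apply: Hinj; last exact/ltP.
  move=> i /ltP Hi.
  have := congr1 (fun A : 'M[R]_(1,n) => A ord0 (Ordinal Hi)) Hv.
  rewrite !mxE rsum_big => H; rewrite -[RHS]H; apply: eq_bigr => k _; rewrite !mxE Hu mulrC //.
have Hfree : row_free M.
  rewrite -kermx_eq0; apply/eqP/row_matrixP => i; rewrite row0; apply: HM.
  by rewrite -row_mul mulmx_ker row0.
have HU : M \in unitmx by rewrite -row_free_unit.
pose N := invmx M.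
pose ix k := @insub nat (fun k => (k < n)%N) 'I_n k.
exists (fun i j => match ix i, ix j with Some a, Some b => N b a | _, _ => 0 end).
have Hix : forall i : 'I_n, ix i = Some i.
  move=> i; rewrite /ix insubT //= => Hi; congr Some; exact: val_inj.
have Hidm : forall a b : 'I_n, idm a b = (1%:M : 'M[R]_n)%R b a.
  move=> a b; rewrite mxE /idm eq_sym; case: (PeanoNat.Nat.eqb_spec a b) => [/val_inj ->|Hab].
    by rewrite eqxx.
  by case: eqP => // Hba; case: Hab; rewrite Hba.
split=> i j /ltP Hi /ltP Hj.
- have -> : i = Ordinal Hi by [].
  have -> : j = Ordinal Hj by [].
  rewrite Hidm -(mulVmx HU) mxE /matmul rsum_big; apply: eq_bigr => k _.
  by rewrite Hix Hix !mxE mulrC.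
- have -> : i = Ordinal Hi by [].
  have -> : j = Ordinal Hj by [].
  rewrite Hidm -(mulmxV HU) mxE /matmul rsum_big; apply: eq_bigr => k _.
  by rewrite Hix Hix !mxE mulrC.
Qed.
End MC.

Lemma Emat_expand n W gamma g h (x : nat -> R) i : (i < n)%nat ->
  rsum n (fun k => Emat W gamma g h i k * x k) = x i - rsum n (fun k => W i k * x k) + (g - h) * gamma * x i.
Proof. intros Hi. unfold Emat.
 rewrite (rsum_ext n _ (fun k => idm i k * x k + ((-1) * (W i k * x k) + ((g - h) * gamma) * (idm i k * x k)))) by (intros; ring).
 rewrite !rsum_plus, !rsum_scal, rsum_idm by auto. ring. Qed.

Fixpoint yit n W gamma g h bb (k : nat) : nat -> R :=
  match k with O => fun _ => g | S k' => Lm n W gamma g h bb (yit n W gamma g h bb k') end.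

Theorem theorem1 (n : nat) (W : nat -> nat -> R) (lam : R) (c : nat -> R)
  (beta gamma : R) (s : nat -> R) (g h : R)
  (HWnn : forall i j, (i < n)%nat -> (j < n)%nat -> 0 <= W i j)
  (HWdiag : forall i, (i < n)%nat -> W i i = 0)
  (Hlam : is_spectral_radius n W lam)
  (Hcpos : forall i, (i < n)%nat -> 0 < c i)
  (Hc : forall j, (j < n)%nat -> rsum n (fun i => W i j * c i) = lam * c j)
  (Hbg : beta >= gamma) (Hg0 : gamma >= 0)
  (Hnorm : 1 - Rmax (norm_inf n W) (norm_one n W) > Rmax (2 * beta) (4 * gamma))
  (Hs : forall i, (i < n)%nat -> 0 <= s i <= 1)
  (Hg : 0 <= g) (Hgs : forall i, (i < n)%nat -> g <= s i)
  (Hsh : forall i, (i < n)%nat -> s i <= h) (Hh : h <= 1) :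
  (exists Einv, is_inverse n (Emat W gamma g h) Einv) /\
  (forall Einv, is_inverse n (Emat W gamma g h) Einv ->
    forall x0 : nat -> R, (forall i, (i < n)%nat -> 0 <= x0 i <= 1) ->
      forall i, (i < n)%nat ->
        Un_cv (fun k => traj n W beta gamma g h s x0 k i)
              (xstar n W beta gamma g h s Einv i)).
Proof.
 assert (Hn1 : 1 - norm_inf n W > 2 * beta /\ 1 - norm_inf n W > 4 * gamma).
 { assert (A1 := Rmax_l (norm_inf n W) (norm_one n W)).
   assert (A2 := Rmax_l (2 * beta) (4 * gamma)).
   assert (A3 := Rmax_r (2 * beta) (4 * gamma)). lra. }
 destruct Hn1 as [Hn1 Hn2].
 assert (Hni := rmaxn_nonneg n (fun i => rsum n (fun j => Rabs (W i j)))).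
 change (rmaxn n (fun i => rsum n (fun j => Rabs (W i j)))) with (norm_inf n W) in Hni.
 set (q := norm_inf n W + gamma * (h - g)).
 assert (Hq : forall i, (i < n)%nat -> g <= h /\ 0 <= q < 1).
 { intros i Hi. assert (g <= h) by (specialize (Hgs i Hi); specialize (Hsh i Hi); lra).
   split; auto. unfold q. split; nra. }
 split.
 - apply MC.inv_exists. intros u Hu i Hi.
   destruct (Hq i Hi) as [Hgh Hq1].
   set (M := rmaxn n (fun j => Rabs (u j))).
   assert (HL : forall j, (j < n)%nat -> u j = Lm n W gamma g h (fun _ => 0) u j).
   { intros j Hj. specialize (Hu j Hj). rewrite Emat_expand in Hu by auto. unfold Lm. lra. }
   assert (HB : forall j, (j < n)%nat -> Rabs (u j) <= q * M).
   { intros j Hj. rewrite HL by auto.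
     replace (Lm n W gamma g h (fun _ => 0) u j) with
       (Lm n W gamma g h (fun _ => 0) u j - Lm n W gamma g h (fun _ => 0) (fun _ => 0) j).
     2:{ unfold Lm. rewrite (rsum_ext n (fun j0 => W j j0 * 0) (fun j0 => 0 * W j j0)) by (intros; ring).
         rewrite rsum_scal. ring. }
     apply Lm_contr; auto; try lra. intros k Hk. rewrite Rminus_0_r.
     apply (rmaxn_ge n (fun j => Rabs (u j))); auto. }
   assert (HM0 : 0 <= M) by apply rmaxn_nonneg.
   assert (HMq : M <= q * M).
   { apply rmaxn_lub; auto. nra. }
   assert (M <= 0) by nra.
   assert (Hui := rmaxn_ge n (fun j => Rabs (u j)) i Hi). fold M in Hui.
   assert (Rabs (u i) = 0) by (assert (A := Rabs_pos (u i)); lra).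
   destruct (Req_dec (u i) 0) as [E0|E0]; auto; exfalso; assert (A := Rabs_no_R0 _ E0); lra.
 - intros Einv HE x0 Hx0 i Hi.
   destruct (Hq i Hi) as [Hgh Hq1].
   set (bb := bvec n W beta gamma g h s).
   set (xs := xstar n W beta gamma g h s Einv).
   assert (Hfix : forall j, (j < n)%nat -> Lm n W gamma g h bb xs j = xs j).
   { intros j Hj. apply xstar_fixed; auto. }
   set (C := rmaxn n (fun j => Rabs (g - xs j))).
   assert (HC : 0 <= C) by apply rmaxn_nonneg.
   assert (Hy : forall k, forall j, (j < n)%nat ->
     (g <= yit n W gamma g h bb k j <= h) /\ Rabs (yit n W gamma g h bb k j - xs j) <= q ^ k * C).
   { induction k; intros j Hj.
     - simpl. split. lra. rewrite Rmult_1_l. apply (rmaxn_ge n (fun j => Rabs (g - xs j))); auto.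
     - split.
       + simpl. apply Lm_inv; [exact HWnn|exact Hj|lra|lra|lra|split; auto|lra|].
         intros k0 Hk0; apply IHk; auto.
       + simpl. rewrite <- (Hfix j Hj). rewrite Rmult_assoc. apply Lm_contr; auto; try lra.
         intros k0 Hk0; apply IHk; auto. }
   assert (Hxs : forall j, (j < n)%nat -> g <= xs j <= h).
   { intros j Hj. split.
     - assert (g - xs j <= 0); [|lra]. apply (geo_nonpos _ q C); auto.
       intros k. destruct (Hy k j Hj) as [[A1 A2] A3].
       assert (A4 := Rle_abs (yit n W gamma g h bb k j - xs j)). lra.
     - assert (xs j - h <= 0); [|lra]. apply (geo_nonpos _ q C); auto.
       intros k. destruct (Hy k j Hj) as [[A1 A2] A3].
       assert (A4 := Rabs_Ropp (yit n W gamma g h bb k j - xs j)).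
       assert (A5 := Rle_abs (- (yit n W gamma g h bb k j - xs j))). lra. }
   assert (Hsfix : forall j, (j < n)%nat -> step n W beta gamma g h s xs j = xs j).
   { intros j Hj. rewrite step_Lm by (apply Hxs; auto). apply Hfix; auto. }
   set (C0 := rmaxn n (fun j => Rabs (x0 j - xs j))).
   assert (HC0 : 0 <= C0) by apply rmaxn_nonneg.
   apply (geo_cv _ _ q C0); auto.
   assert (Ht : forall k j, (j < n)%nat -> Rabs (traj n W beta gamma g h s x0 k j - xs j) <= q ^ k * C0).
   { induction k; intros j Hj.
     - simpl. rewrite Rmult_1_l. apply (rmaxn_ge n (fun j => Rabs (x0 j - xs j))); auto.
     - simpl. rewrite <- (Hsfix j Hj). rewrite Rmult_assoc. apply step_contr; [exact HWnn|exact Hj|lra|split; auto|].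
       intros k0 Hk0; apply IHk; auto. }
   intros k; apply Ht; auto.
Qed.
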